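(* Let $n\ge4$ be a power of $2$. Then $\mathcal{B}^{(n)}\subseteq\mathcal{M}^{(b,n)}$ for every integer $b\in(1,n)$ dividing $n$. When $n\ge512$ the inclusion is strict.
   Context: Matrices over $\mathbb{F}\in\{\mathbb{R},\mathbb{C}\}$. For $d$ dividing $n$: $\mathcal{B}\mathcal{D}^{(d,n)}$ is the class of $n\times n$ block-diagonal matrices with $n/d$ arbitrary diagonal blocks of size $d\times d$; $\mathcal{D}\mathcal{B}^{(d,n)}$ is the class of $n\times n$ matrices which, partitioned into an $(n/d)\times(n/d)$ grid of $d\times d$ blocks, have every block diagonal. The Monarch class $\mathcal{M}^{(b,n)}$ is the set of products $\mathbf{L}\mathbf{R}$ with $\mathbf{L}\in\mathcal{D}\mathcal{B}^{(b,n)}$ and $\mathbf{R}\in\mathcal{B}\mathcal{D}^{(b,n)}$. For $k\in\{2,4,\dots,n\}$ a power of 2, a butterfly factor matrix in $\mathcal{B}\mathcal{F}^{(n,k)}$ is an $n\times n$ block-diagonal matrix with $n/k$ diagonal blocks, each a $k\times k$ butterfly factor $\begin{bmatrix}\mathbf{D}_1&\mathbf{D}_2\\\mathbf{D}_3&\mathbf{D}_4\end{bmatrix}$ with $\mathbf{D}_1,\dots,\mathbf{D}_4$ arbitrary $(k/2)\times(k/2)$ diagonal matrices. The butterfly class $\mathcal{B}^{(n)}$ consists of all products $\mathbf{B}_n\mathbf{B}_{n/2}\cdots\mathbf{B}_2$ with $\mathbf{B}_k\in\mathcal{B}\mathcal{F}^{(n,k)}$. *)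

(* Defs.v *)
From mathcomp Require Import all_boot all_algebra.
From mathcomp Require Import reals complex.
Set Implicit Arguments. Unset Strict Implicit. Unset Printing Implicit Defensive.
Import GRing.Theory Num.Theory.
Local Open Scope ring_scope.

Section Classes.
Variable F : fieldType.

Definition is_BD (d n : nat) (A : 'M[F]_n) : Prop :=
  forall i j : 'I_n, (i %/ d)%N <> (j %/ d)%N -> A i j = 0.

(* DB^(d,n): n/d x n/d grid of d x d blocks, each block diagonal:
   entry (i,j) is in block (i/d, j/d) at position (i mod d, j mod d). *)
Definition is_DB (d n : nat) (A : 'M[F]_n) : Prop :=
  forall i j : 'I_n, (i %% d)%N <> (j %% d)%N -> A i j = 0.

Definition is_monarch (b n : nat) (A : 'M[F]_n) : Prop :=
  exists L R : 'M[F]_n, [/\ is_DB b L, is_BD b R & A = L *m R].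

(* k x k butterfly factor [D1 D2; D3 D4] with D1..D4 diagonal (k/2)x(k/2):
   entry (i,j) can be nonzero only if i mod (k/2) = j mod (k/2). *)
Definition is_butterfly_factor (k : nat) (A : 'M[F]_k) : Prop :=
  forall i j : 'I_k, (i %% k./2)%N <> (j %% k./2)%N -> A i j = 0.

Lemma blk_lt (n k l i : nat) : (i < k)%N -> (l * k + k <= n)%N -> (l * k + i < n)%N.
Proof. by move=> hi hk; apply: leq_trans hk; rewrite ltn_add2l. Qed.

Definition is_BF (n k : nat) (A : 'M[F]_n) : Prop :=
  (forall i j : 'I_n, (i %/ k)%N <> (j %/ k)%N -> A i j = 0) /\
  (forall (l : nat), (l < n %/ k)%N ->
     forall (Hk : (l * k + k <= n)%N),
     is_butterfly_factor
       (\matrix_(i < k, j < k)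
          A (@Ordinal n (l * k + i) (blk_lt (ltn_ord i) Hk))
            (@Ordinal n (l * k + j) (blk_lt (ltn_ord j) Hk)))).

(* list [n; n/2; ...; 2] of sizes, for n = 2^m *)
Definition butterfly_sizes (n : nat) : seq nat :=
  [seq (2 ^ j)%N | j <- rev (iota 1 (trunc_log 2 n))].

Definition mprod_seq (n : nat) (B : nat -> 'M[F]_n) (ks : seq nat) : 'M[F]_n :=
  foldr (fun k M => B k *m M) 1%:M ks.

Definition is_butterfly (n : nat) (A : 'M[F]_n) : Prop :=
  exists B : nat -> 'M[F]_n,
    (forall k, k \in butterfly_sizes n -> is_BF k (B k)) /\
    A = mprod_seq B (butterfly_sizes n).

Definition thmC15_over : Prop :=
  forall (n m : nat), n = (2 ^ m)%N -> (4 <= n)%N ->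
    (forall b : nat, (1 < b < n)%N -> (b %| n)%N ->
       forall A : 'M[F]_n, is_butterfly A -> is_monarch b A) /\
    ((512 <= n)%N ->
     forall b : nat, (1 < b < n)%N -> (b %| n)%N ->
       exists A : 'M[F]_n, is_monarch b A /\ ~ is_butterfly A).

End Classes.

(* Main.v *)
Require Import Defs.
From mathcomp Require Import all_boot all_algebra.
From mathcomp Require Import reals complex.
From mathcomp Require Import ring zify.
Set Implicit Arguments. Unset Strict Implicit. Unset Printing Implicit Defensive.
Import GRing.Theory Num.Theory.

Section Helpers.
Variable F : fieldType.
Local Open Scope ring_scope.

Lemma DB_mul b n (X Y : 'M[F]_n) : is_DB b X -> is_DB b Y -> is_DB b (X *m Y).
Proof.
move=> hX hY i j hij; rewrite mxE big1 // => k _.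
case: (eqVneq (i %% b)%N (k %% b)%N) => [e|ne].
- by rewrite (hY k j) ?mulr0 // -e.
- by rewrite hX ?mul0r //; apply/eqP.
Qed.

Lemma BD_mul b n (X Y : 'M[F]_n) : is_BD b X -> is_BD b Y -> is_BD b (X *m Y).
Proof.
move=> hX hY i j hij; rewrite mxE big1 // => k _.
case: (eqVneq (i %/ b)%N (k %/ b)%N) => [e|ne].
- by rewrite (hY k j) ?mulr0 // -e.
- by rewrite hX ?mul0r //; apply/eqP.
Qed.

Lemma DB_1 b n : is_DB b (1%:M : 'M[F]_n).
Proof.
move=> i j h; rewrite mxE (_ : (i == j) = false) //; apply/eqP => e; apply: h; by rewrite e.
Qed.

Lemma BD_1 b n : is_BD b (1%:M : 'M[F]_n).
Proof.
move=> i j h; rewrite mxE (_ : (i == j) = false) //; apply/eqP => e; apply: h; by rewrite e.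
Qed.

Lemma mprod_P n (P : 'M[F]_n -> Prop) : P 1%:M ->
  (forall X Y, P X -> P Y -> P (X *m Y)) -> forall B ks,
  (forall k, k \in ks -> P (B k)) -> P (mprod_seq B ks).
Proof.
move=> h1 hM B; elim => [|k ks IH] hk //=.
apply: hM; first by apply: hk; rewrite inE eqxx.
by apply: IH => k' hk'; apply: hk; rewrite inE hk' orbT.
Qed.

Lemma mprod_cat n (B : nat -> 'M[F]_n) s1 s2 :
  mprod_seq B (s1 ++ s2) = mprod_seq B s1 *m mprod_seq B s2.
Proof.
elim: s1 => [|k s IH] /=; first by rewrite mul1mx.
by rewrite /mprod_seq /= -/(mprod_seq B (s ++ s2)) IH mulmxA.
Qed.

Lemma BF_supp n k (X : 'M[F]_n) : is_BF k X -> (0 < k)%N -> (2 %| k)%N -> (k %| n)%N ->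
  forall x y : 'I_n, X x y != 0 -> (x %/ k = y %/ k)%N /\ (x %% k./2 = y %% k./2)%N.
Proof.
move=> [h1 h2] k0 k2 kn x y hxy.
have exy : (x %/ k = y %/ k)%N.
  by case: (eqVneq (x %/ k)%N (y %/ k)%N) => // ne; move/eqP: hxy; case; apply: h1; apply/eqP.
split => //.
set l := (x %/ k)%N.
have hl : (l < n %/ k)%N by rewrite ltn_divLR // divnK.
have Hk : (l * k + k <= n)%N.
  by rewrite -mulSnr -(divnK kn) leq_mul2r hl orbT.
have := h2 l hl Hk (Ordinal (ltn_pmod x k0)) (Ordinal (ltn_pmod y k0)).
rewrite mxE /=.
have k2k : (k./2 %| k)%N.
  by case/dvdnP: k2 => c ->; rewrite -divn2 mulnK // dvdn_mulr.
rewrite !(modn_dvdm _ k2k).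
case: (eqVneq (x %% k./2)%N (y %% k./2)%N) => // ne hz.
move/eqP: hxy; case.
rewrite -hz; last by apply/eqP.
congr (X _ _); apply: val_inj => /=.
  by rewrite /l -divn_eq.
by rewrite /l exy -divn_eq.
Qed.

Lemma monarch_inv p n (A : 'M[F]_n) : is_monarch p A ->
  forall i i' j1 j2 : 'I_n, (i %% p = i' %% p)%N -> (j1 %/ p = j2 %/ p)%N ->
  A i j1 * A i' j2 = A i j2 * A i' j1.
Proof.
move=> [L [R [hL hR ->]]] i i' j1 j2 ei ej.
have diag : forall (f g : 'I_n -> F), (forall a b, a != b -> f a * g b = 0) ->
    (\sum_a f a) * (\sum_a g a) = \sum_a f a * g a.
  move=> f g H; rewrite mulr_suml; apply: eq_bigr => a _.
  rewrite mulr_sumr (bigD1 a) //= big1 ?addr0 // => b hb; apply: H; by rewrite eq_sym.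
have key : forall (ja jb : 'I_n) (a b : 'I_n), (ja %/ p = jb %/ p)%N -> a != b ->
    L i a * R a ja * (L i' b * R b jb) = 0.
  move=> ja jb a b ejj ne.
  case: (eqVneq (i %% p)%N (a %% p)%N) => [e1|n1]; last first.
    by rewrite (hL i a) ?mul0r ?mulr0 ?mul0r ?mulr0 //; apply/eqP.
  case: (eqVneq (a %/ p)%N (ja %/ p)%N) => [e2|n2]; last first.
    by rewrite (hR a ja) ?mul0r ?mulr0 ?mul0r ?mulr0 //; apply/eqP.
  case: (eqVneq (i' %% p)%N (b %% p)%N) => [e3|n3]; last first.
    by rewrite (hL i' b) ?mul0r ?mulr0 ?mul0r ?mulr0 //; apply/eqP.
  case: (eqVneq (b %/ p)%N (jb %/ p)%N) => [e4|n4]; last first.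
    by rewrite (hR b jb) ?mul0r ?mulr0 ?mul0r ?mulr0 //; apply/eqP.
  exfalso; move/eqP: ne; apply; apply: val_inj => /=.
  by rewrite (divn_eq a p) (divn_eq b p) e2 e4 ejj -e1 -e3 ei.
rewrite !mxE !diag; try by move=> a b; apply: key; rewrite ?ej.
by apply: eq_bigr => a _; ring.
Qed.


Lemma pow2_of_dvd n m b : n = (2^m)%N -> (b %| n)%N -> exists2 s, (s <= m)%N & b = (2^s)%N.
Proof.
by move=> -> /(@dvdn_pfactor 2 b m isT) [s hs ->]; exists s.
Qed.

Lemma part1 n m b (A : 'M[F]_n) : n = (2^m)%N -> (1 < b < n)%N -> (b %| n)%N ->
  is_butterfly A -> is_monarch b A.
Proof.
move=> hn /andP[hb1 hbn] hbd [B [hB ->]].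
have [s hsm eb] := pow2_of_dvd hn hbd.
have s0 : (0 < s)%N by move: hb1; rewrite eb; case: (s).
have sm : (s < m)%N by move: hbn; rewrite eb hn ltn_exp2l.
have hsz : butterfly_sizes n = [seq (2^j)%N | j <- rev (iota s.+1 (m - s))]
       ++ [seq (2^j)%N | j <- rev (iota 1 s)].
  rewrite /butterfly_sizes hn trunc_expnK // -map_cat -rev_cat.
  by congr (map _ (rev _)); rewrite -{1}(subnKC (ltnW sm)) iotaD add1n.
have hk : forall j, (0 < j <= m)%N -> (2^j)%N \in butterfly_sizes n -> 
   [/\ is_BF (2^j)%N (B (2^j)%N), (0 < 2^j)%N, (2 %| 2^j)%N & (2^j %| n)%N].
  move=> j /andP[j0 jm] hin; split.
  - exact: hB.
  - by rewrite expn_gt0.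
  - by rewrite -{1}(expn1 2) dvdn_exp2l.
  - by rewrite hn dvdn_exp2l.
rewrite hsz mprod_cat.
eexists; eexists; split; last reflexivity.
- apply: mprod_P; [exact: DB_1 | exact: DB_mul |].
  move=> k /mapP [j]; rewrite mem_rev mem_iota => /andP[hj1 hj2] ->.
  have hj0 : (0 < j <= m)%N.
    apply/andP; split; first by apply: leq_trans hj1.
    by move: hj2; rewrite addSn subnKC.
  have hin : (2^j)%N \in butterfly_sizes n.
    rewrite hsz mem_cat; apply/orP; left; apply: map_f.
    by rewrite mem_rev mem_iota hj1 hj2.
  have [hBF k0 k2 kn] := hk j hj0 hin.
  move=> x y hxy; case: (eqVneq (B (2^j)%N x y) 0) => // nz; exfalso; apply: hxy.
  have [_ e] := BF_supp hBF k0 k2 kn nz.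
  case: j hj1 {hj2 hj0 hBF k0 k2 kn nz hin} e => // j' hj1 e.
  have eh : ((2^j'.+1)./2 = 2^j')%N by rewrite expnS mul2n doubleK.
  rewrite eh in e.
  have hdiv : (b %| 2^j')%N by rewrite eb dvdn_exp2l.
  by rewrite -(modn_dvdm x hdiv) e (modn_dvdm y hdiv).
- apply: mprod_P; [exact: BD_1 | exact: BD_mul |].
  move=> k /mapP [j]; rewrite mem_rev mem_iota => /andP[hj1 hj2] ->.
  have hjs : (j <= s)%N by move: hj2; rewrite add1n ltnS.
  have hj0 : (0 < j <= m)%N by rewrite hj1 (leq_trans hjs (ltnW sm)).
  have hin : (2^j)%N \in butterfly_sizes n.
    rewrite hsz mem_cat; apply/orP; right; apply: map_f.
    by rewrite mem_rev mem_iota hj1 hj2.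
  have [hBF k0 k2 kn] := hk j hj0 hin.
  move=> x y hxy; case: (eqVneq (B (2^j)%N x y) 0) => // nz; exfalso; apply: hxy.
  have [e _] := BF_supp hBF k0 k2 kn nz.
  by rewrite eb -(subnKC hjs) expnD !divnMA e.
Qed.

Lemma notbf n m p (u v : 'I_n) : n = (2^m)%N -> (1 < p < n)%N -> (p %| n)%N ->
  (0 < u)%N -> (p %| u)%N -> (0 < v < p)%N ->
  ~ is_butterfly (1%:M + delta_mx u v : 'M[F]_n).
Proof.
move=> hn hp hpd hu hpu /andP[hv0 hvp] /(part1 hn hp hpd) hm.
have n0 : (0 < n)%N by case/andP: hp => _ h2; apply: leq_ltn_trans h2.
pose i0 := Ordinal n0.
have := @monarch_inv p n _ hm i0 u i0 v.
have hpu' : (p <= u)%N by apply: dvdn_leq.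
have e1 : (u == i0) = false by rewrite -val_eqE /= gtn_eqF.
have e2 : (v == i0) = false by rewrite -val_eqE /= gtn_eqF.
have e3 : (u == v) = false by rewrite -val_eqE /= gtn_eqF // (leq_trans hvp hpu').
rewrite !mxE !eqxx e1 e3 ![i0 == _]eq_sym e1 e2 /=.
rewrite mod0n div0n divn_small // (eqP hpu).
rewrite ?mulr1n ?mulr0n ?addr0 ?add0r ?mulr1 ?mulr0 => /(_ erefl erefl) /eqP.
by rewrite oner_eq0.
Qed.

End Helpers.

Section Main.
Local Open Scope ring_scope.
Lemma thm_over (F : fieldType) : thmC15_over F.
Proof.
move=> n m hn h4; split.
  by move=> b hb hbd A hA; exact: part1 hn hb hbd hA.
move=> h512 b hb hbd.
have [s hsm eb] := pow2_of_dvd hn hbd.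
case/andP: hb => hb1 hbn.
have sm : (s < m)%N by move: hbn; rewrite eb hn ltn_exp2l.
have m9 : (9 <= m)%N by move: h512; rewrite hn (_ : 512 = 2^9)%N // leq_exp2l.
have n0 : (0 < n)%N by rewrite hn expn_gt0.
case: (ltnP s.+1 m) => hs.
- (* b <= n/4 : use u = n/2, v = b, p = n/2 *)
  have hh : (2^m.-1 < n)%N by rewrite hn ltn_exp2l // prednK // (leq_trans _ m9).
  have hbn' : (b < n)%N by [].
  pose u := Ordinal hh. pose v := Ordinal hbn'.
  exists (1%:M + delta_mx u v); split.
    exists (1%:M + delta_mx u v), 1%:M; split; [|exact: BD_1| by rewrite mulmx1].
    move=> i j hij; rewrite !mxE.
    have -> : (i == j) = false by apply/eqP => e; apply: hij; rewrite e.
    have -> : ((i == u) && (j == v)) = false.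
      apply/andP => -[/eqP ei /eqP ej]; apply: hij; rewrite ei ej /= eb.
      rewrite (eqP (_ : 2^s %| 2^m.-1)%N) ?modnn //.
      by rewrite dvdn_exp2l // -ltnS prednK // (leq_trans _ m9).
    by rewrite addr0.
  apply: (@notbf F n m (2^m.-1)%N u v hn).
  - rewrite hh andbT -{1}(expn1 2) leq_exp2l //.
    by rewrite -ltnS prednK // (leq_trans _ m9).
  - by rewrite hn dvdn_exp2l // leq_pred.
  - by rewrite /= expn_gt0.
  - by [].
  - rewrite /= eb expn_gt0 /= ltn_exp2l //.
    by rewrite -ltnS prednK // (leq_trans _ m9).
- (* b = n/2 : use u = n/4, v = 1, p = n/4 *)
  have es : s = m.-1 by apply/eqP; rewrite -eqSS prednK ?(leq_trans _ m9) // eqn_leq sm hs.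
  have hq : (2^m.-2 < n)%N by rewrite hn ltn_exp2l //; lia.
  have h1 : (1 < n)%N by rewrite (leq_trans _ h4).
  pose u := Ordinal hq. pose v := Ordinal h1.
  exists (1%:M + delta_mx u v); split.
    exists 1%:M, (1%:M + delta_mx u v); split; [exact: DB_1| |by rewrite mul1mx].
    move=> i j hij; rewrite !mxE.
    have -> : (i == j) = false by apply/eqP => e; apply: hij; rewrite e.
    have -> : ((i == u) && (j == v)) = false.
      apply/andP => -[/eqP ei /eqP ej]; apply: hij; rewrite ei ej /= eb es.
      rewrite divn_small; last by rewrite ltn_exp2l //; lia.
      by rewrite divn_small // -{1}(expn1 2) leq_exp2l //; lia.
    by rewrite addr0.
  apply: (@notbf F n m (2^m.-2)%N u v hn).
  - by rewrite hq andbT -{1}(expn1 2) leq_exp2l //; lia.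
  - by rewrite hn dvdn_exp2l // (leq_trans (leq_pred _) (leq_pred _)).
  - by rewrite /= expn_gt0.
  - by [].
  - by rewrite /= -{1}(expn1 2) leq_exp2l //; lia.
Qed.

End Main.

Local Open Scope complex_scope.

Theorem theoremC15 (R : realType) :
  thmC15_over R /\ thmC15_over R[i].
Proof. split; exact: thm_over. Qed.
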